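(* Strong admissibility semantics is serialisable with the selection function $\alpha_{gr}(X,Y,Z)=X$ and the termination function $\beta_{adm}(F,S)=1$ for all $F,S$.
   Context: An abstract argumentation framework (AF) is a pair $F=(A,R)$ with $A$ a finite subset of a fixed universal set of arguments $\mathfrak{A}$ and $R\subseteq A\times A$ ($a\to b$ means $(a,b)\in R$). For $S\subseteq A$: $S^+=\{a\mid \exists b\in S: b\to a\}$, $S^-=\{a\mid\exists b\in S: a\to b\}$; for sets $S,S'$, $S\to S'$ means $S^+\cap S'\neq\emptyset$. $S$ defends $b$ if every attacker of $b$ is attacked by some element of $S$; $S$ is admissible if it is conflict-free and defends all its elements. An admissible set $E$ is strongly admissible if $E=\emptyset$ or each $a\in E$ is defended by some strongly admissible $E'\subseteq E\setminus\{a\}$; strong admissibility semantics assigns to $F$ the set of its strongly admissible sets. An initial set is a non-empty admissible set with no non-empty admissible proper subset; $\mathrm{IS}(F)$ is the set of initial sets. An initial set $S$ is unattacked if $S^-=\emptyset$; unchallenged if $S^-\neq\emptyset$ and no $S'\in\mathrm{IS}(F)$ has $S'\to S$; challenged if some $S'\in\mathrm{IS}(F)$ has $S'\to S$. Write $\mathrm{IS}^{u}(F),\mathrm{IS}^{uc}(F),\mathrm{IS}^{c}(F)$ for these sets. The reduct is $F^S=(A',R\cap(A'\times A'))$ with $A'=A\setminus(S\cup S^+)$. A selection function $\alpha$ maps any three sets $X,Y,Z$ of sets of arguments to a subset of $X\cup Y\cup Z$; a termination function $\beta$ maps pairs $(F,S)$ to $\{0,1\}$. Transitions: $(F,S)\to(F^{S'},S\cup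 S')$ whenever $S'\in\alpha(\mathrm{IS}^u(F),\mathrm{IS}^{uc}(F),\mathrm{IS}^c(F))$. $(F,S)\leadsto^{\alpha,\beta}(F',S')$ means $(F',S')$ is reachable from $(F,S)$ in finitely many (possibly zero) transitions and $\beta(F',S')=1$. $\mathcal{E}^{\alpha,\beta}(F)$ is the set of all $S$ with $(F,\emptyset)\leadsto^{\alpha,\beta}(F',S)$ for some $F'$. A semantics $\sigma$ is serialisable with $\alpha,\beta$ if $\sigma(F)=\mathcal{E}^{\alpha,\beta}(F)$ for all AFs $F$. *)

(* Defs.v *)
From HB Require Import structures.
From mathcomp Require Import all_boot.
From mathcomp Require Import finmap.
Set Implicit Arguments. Unset Strict Implicit. Unset Printing Implicit Defensive.
Local Open Scope fset_scope.

Section AFdefs.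
Variable U : choiceType.

Record AF := mkAF { args : {fset U}; att : {fset (U * U)} }.

Definition AF_wf (F : AF) : Prop :=
  forall p, p \in att F -> p.1 \in args F /\ p.2 \in args F.

Definition attacks (F : AF) (a b : U) : Prop := (a, b) \in att F.

Definition set_attacks (F : AF) (S S' : {fset U}) : Prop :=
  exists a b, a \in S /\ b \in S' /\ attacks F a b.

Definition conflict_free (F : AF) (S : {fset U}) : Prop :=
  forall a b, a \in S -> b \in S -> ~ attacks F a b.

Definition defends (F : AF) (S : {fset U}) (b : U) : Prop :=
  forall c, attacks F c b -> exists d, d \in S /\ attacks F d c.

Definition admissible (F : AF) (S : {fset U}) : Prop :=
  S `<=` args F /\ conflict_free F S /\ (forall a, a \in S -> defends F S a).

(* strongly admissible sets (least solution of the recursive definition) *)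
Inductive strongly_admissible (F : AF) : {fset U} -> Prop :=
| sa_intro (E : {fset U}) :
    admissible F E ->
    (E = fset0 \/
     forall a, a \in E -> exists E' : {fset U},
         strongly_admissible F E' /\ E' `<=` E `\ a /\ defends F E' a) ->
    strongly_admissible F E.

Definition initial (F : AF) (S : {fset U}) : Prop :=
  S != fset0 /\ admissible F S /\
  (forall S' : {fset U}, S' `<` S -> S' != fset0 -> ~ admissible F S').

Definition IS_u (F : AF) (S : {fset U}) : Prop :=
  initial F S /\ (forall a b, b \in S -> ~ attacks F a b).

Definition IS_uc (F : AF) (S : {fset U}) : Prop :=
  initial F S /\ (exists a b, b \in S /\ attacks F a b) /\
  ~ (exists S', initial F S' /\ set_attacks F S' S).

Definition IS_c (F : AF) (S : {fset U}) : Prop :=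
  initial F S /\ (exists S', initial F S' /\ set_attacks F S' S).

Definition reduct (F : AF) (S : {fset U}) : AF :=
  let A' := [fset a in args F | (a \notin S) && ~~ has (fun b => (b, a) \in att F) S] in
  mkAF A' [fset p in att F | (p.1 \in A') && (p.2 \in A')].

Definition setset := {fset U} -> Prop.

Definition selection := setset -> setset -> setset -> setset.
Definition termination := AF -> {fset U} -> bool.

Definition trans (alpha : selection) (c c' : AF * {fset U}) : Prop :=
  exists S', alpha (IS_u c.1) (IS_uc c.1) (IS_c c.1) S' /\
             c' = (reduct c.1 S', c.2 `|` S').

Inductive reach (alpha : selection) : AF * {fset U} -> AF * {fset U} -> Prop :=
| reach_refl c : reach alpha c c
| reach_step c c' c'' : trans alpha c c' -> reach alpha c' c'' -> reach alpha c c''.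

Definition ext (alpha : selection) (beta : termination) (F : AF) : setset :=
  fun S => exists F', reach alpha (F, fset0) (F', S) /\ beta F' S = true.

Definition serialisable (sigma : AF -> setset) (alpha : selection)
  (beta : termination) : Prop :=
  forall F, AF_wf F -> forall S, sigma F S <-> ext alpha beta F S.

Definition alpha_gr : selection := fun X _ _ => X.
Definition beta_adm : termination := fun _ _ => true.

End AFdefs.

(* Main.v *)
Require Import Defs.
From mathcomp Require Import all_boot finmap.
Set Implicit Arguments. Unset Strict Implicit. Unset Printing Implicit Defensive.
Local Open Scope fset_scope.

Section Proof7.
Variable U : choiceType.
Implicit Types (F G : AF U) (S T E : {fset U}).

Definition Inv F G T : Prop :=
  (forall x, x \in args G <-> (x \in args F /\ x \notin T /\
                               (forall t, t \in T -> ~ attacks F t x))) /\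
  (forall p, p \in att G <-> (p \in att F /\ p.1 \in args G /\ p.2 \in args G)).

Lemma reduct_args G S x :
  x \in args (reduct G S) = [&& x \in args G, x \notin S &
                              ~~ has (fun b => (b, x) \in att G) S].
Proof. by rewrite /reduct /= !inE. Qed.

Lemma reduct_att G S p :
  p \in att (reduct G S) = [&& p \in att G, p.1 \in args (reduct G S) &
                              p.2 \in args (reduct G S)].
Proof. by rewrite /reduct /= !inE. Qed.

Lemma Inv0 F : AF_wf F -> Inv F F fset0.
Proof.
move=> wf; split=> [x|p]; split.
- by move=> h; split=> //; split=> // t; rewrite inE.
- by case.
- by move=> h; split=> //; apply: wf.
- by case.
Qed.

Lemma Inv_att F G T a b : Inv F G T -> attacks G a b -> attacks F a b.
Proof. by move=> [_ h] /h []. Qed.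

Lemma Inv_step F G T S : Inv F G T -> S `<=` args G ->
  Inv F (reduct G S) (T `|` S).
Proof.
move=> [hA hR] /fsubsetP sub; split=> [x|p].
- rewrite reduct_args; split.
  + case/and3P=> xG xS /hasPn nh.
    have [xF [xT nT]] := (hA x).1 xG.
    split=> //; split; first by rewrite in_fsetU negb_or xT.
    move=> t; rewrite in_fsetU => /orP[tT|tS]; first exact: nT.
    move=> att_tx; move: (nh t tS) => /negP; apply.
    apply/(hR (t, x)); split=> //; split=> //=; exact: sub.
  + move=> [xF [xTS nTS]].
    move: xTS; rewrite in_fsetU negb_or => /andP[xT xS].
    have xG : x \in args G.
      apply/hA; split=> //; split=> // t tT; apply: nTS; by rewrite in_fsetU tT.
    apply/and3P; split=> //; apply/hasPn => t tS; apply/negP => h.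
    have [h1 _] := (hR (t, x)).1 h.
    by apply: (nTS t) => //; rewrite in_fsetU tS orbT.
- rewrite reduct_att; split.
  + case/and3P=> pG p1 p2; have [pF _] := (hR p).1 pG; by [].
  + move=> [pF [p1 p2]]; apply/and3P; split=> //.
    move: p1 p2; rewrite !reduct_args => /and3P[p1 _ _] /and3P[p2 _ _].
    by apply/hR.
Qed.


Lemma defends_sub F S S' a : S `<=` S' -> defends F S a -> defends F S' a.
Proof.
move=> /fsubsetP sub h c /h [d [dS dc]]; exists d; split=> //; exact: sub.
Qed.

Lemma SA_adm F E : strongly_admissible F E -> admissible F E.
Proof. by case. Qed.

Lemma SA_def F E a : strongly_admissible F E -> a \in E ->
  exists E', strongly_admissible F E' /\ E' `<=` E `\ a /\ defends F E' a.
Proof.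
case=> {}E _ [-> | h]; first by rewrite in_fset0.
exact: h.
Qed.

Lemma SA_step F G T S : AF_wf F -> Inv F G T -> strongly_admissible F T ->
  IS_u G S -> strongly_admissible F (T `|` S).
Proof.
move=> wf [hA hR] saT [[_ [[/fsubsetP SG [cfS _]] _]] unatt].
have [/fsubsetP TF [cfT defT]] := SA_adm saT.
have sinfo : forall s, s \in S -> s \in args F /\ s \notin T /\
    (forall t, t \in T -> ~ attacks F t s).
  by move=> s /SG /hA.
have defS : forall s, s \in S -> defends F T s.
  move=> s sS c cs.
  have [_ [sT nT]] := sinfo s sS.
  have cF : c \in args F by have [] := wf (c, s) cs.
  case: (boolP (c \in T)) => cT; first by case: (nT c cT).
  case: (boolP (has (fun t => (t, c) \in att F) T)).
    by case/hasP=> t tT tc; exists t.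
  move/hasPn=> nh.
  have cG : c \in args G.
    apply/hA; split=> //; split=> // t tT tc; by move: (nh t tT); rewrite tc.
  case: (unatt c s sS); apply/hR; split=> //; split=> //; exact: SG.
have admTS : admissible F (T `|` S).
  split; [apply/fsubsetP=> x; rewrite in_fsetU => /orP[/TF|/sinfo []] //|split].
  - move=> a b; rewrite !in_fsetU => /orP[aT|aS] /orP[bT|bS].
    + exact: cfT.
    + by have [_ [_ nT]] := sinfo b bS; apply: nT.
    + move=> ab; have [d [dT da]] := defT b bT a ab.
      by have [_ [_ nT]] := sinfo a aS; apply: (nT d).
    + move=> ab; apply: (cfS a b aS bS); apply/hR; split=> //; split=> /=; exact: SG.
  - move=> a; rewrite in_fsetU => /orP[aT|aS].
    + by apply: (defends_sub (fsubsetUl T S)); apply: defT.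
    + by apply: (defends_sub (fsubsetUl T S)); apply: defS.
apply: sa_intro => //; right=> a; rewrite in_fsetU => /orP[aT|aS].
- have [E' [saE' [subE' dE']]] := SA_def saT aT.
  exists E'; split=> //; split=> //.
  apply: (fsubset_trans subE'); apply/fsubsetP=> x; rewrite !in_fsetD1 in_fsetU.
  by case/andP=> -> ->.
- exists T; split=> //; split; last exact: defS.
  have [_ [aT _]] := sinfo a aS.
  apply/fsubsetP=> x xT; rewrite in_fsetD1 in_fsetU xT andbT.
  by apply/eqP=> xa; move: aT; rewrite -xa xT.
Qed.

Lemma dir1 F : AF_wf F -> forall c c', reach (@alpha_gr U) c c' ->
  forall G T, c = (G, T) -> Inv F G T -> strongly_admissible F T ->
  strongly_admissible F c'.2.
Proof.
move=> wf c c'; elim=> [c0 G T -> | c0 c1 c2 [S' [hS ->]] _ IH G T E0]; first by [].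
subst c0; move=> inv saT; rewrite /alpha_gr /= in hS.
apply: (IH _ _ erefl); last exact: SA_step inv saT hS.
apply: Inv_step => //; by case: hS => [[_ [[]]]].
Qed.


Lemma key F n : forall E, #|`E| < n -> strongly_admissible F E -> forall T,
  E `<=` T \/ exists a, a \in E /\ a \notin T /\ defends F T a.
Proof.
elim: n => [//|n IH] E cE saE T.
case: (boolP (E `<=` T)) => [|/fsubsetPn [a aE aT]]; first by left.
right.
have [E' [saE' [subE' dE']]] := SA_def saE aE.
have cE' : #|`E'| < n.
  have := fproper_ltn_card (fproperD1 aE).
  have := fsubset_leq_card subE'.
  move: cE; clear; move=> h1 h2 h3.
  rewrite ltnS in h1; exact: leq_trans (leq_ltn_trans h2 h3) h1.
case: (IH E' cE' saE' T) => [sub | [b [bE' [bT db]]]].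
- by exists a; split=> //; split=> //; apply: defends_sub dE'.
- exists b; split=> //.
  by move: (fsubsetP subE' b bE'); rewrite in_fsetD1 => /andP[].
Qed.

Lemma dir2 F E : AF_wf F -> strongly_admissible F E -> forall n G T,
  Inv F G T -> T `<=` E -> #|`E `\` T| < n ->
  exists G', reach (@alpha_gr U) (G, T) (G', E).
Proof.
move=> wf saE n; elim: n => [//|n IH] G T [hA hR] TE cn.
have [/fsubsetP EF [cfE defE]] := SA_adm saE.
case: (key (leqnn (#|`E|).+1) saE T) => [ET | [a [aE [aT dTa]]]].
  exists G; have -> : E = T by apply/eqP; rewrite eqEfsubset ET TE.
  exact: reach_refl.
have aG : a \in args G.
  apply/hA; split; first exact: EF.
  split=> // t tT; apply: cfE => //; exact: (fsubsetP TE).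
have unatt : forall c, attacks G c a -> False.
  move=> c /hR [ca [cG _]].
  have [d [dT dc]] := dTa c ca.
  by have [_ [_ h]] := (hA c).1 cG; apply: (h d).
have isu : IS_u G [fset a].
  split; last by move=> c b; rewrite in_fset1 => /eqP ->; apply: unatt.
  split.
    apply/eqP=> h; have : a \in [fset a] by rewrite in_fset1 eqxx.
    by rewrite h in_fset0.
  split.
    split; first by apply/fsubsetP=> x; rewrite in_fset1 => /eqP ->.
    split.
      move=> x y; rewrite !in_fset1 => /eqP -> /eqP ->; exact: unatt.
    move=> x; rewrite in_fset1 => /eqP -> c /unatt [].
  move=> S'; rewrite fproperEneq fsubset1 => /andP[ne /orP[e|e]] ne0.
    by move: ne; rewrite e.
  by move: ne0; rewrite e.
have aGs : [fset a] `<=` args G by apply/fsubsetP=> x; rewrite in_fset1 => /eqP ->.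
have inv' := Inv_step (conj hA hR) aGs.
have TE' : T `|` [fset a] `<=` E.
  apply/fsubsetP=> x; rewrite in_fsetU in_fset1 => /orP[/(fsubsetP TE) //|/eqP -> //].
have cn' : #|`E `\` (T `|` [fset a])| < n.
  have pr : E `\` (T `|` [fset a]) `<` E `\` T.
    rewrite fproperEneq; apply/andP; split.
      apply/negP=> /eqP h.
      have : a \in E `\` T by rewrite in_fsetD aT aE.
      by rewrite -h in_fsetD in_fsetU in_fset1 eqxx orbT.
    apply/fsubsetP=> x; rewrite !in_fsetD in_fsetU negb_or => /andP[/andP[-> _] ->].
    by [].
  have := fproper_ltn_card pr; move: cn; rewrite ltnS => h1 h2.
  exact: leq_trans h2 h1.
have [G' r] := IH _ _ inv' TE' cn'.
exists G'; apply: reach_step r.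
by exists [fset a]; split.
Qed.

Theorem theorem7' : serialisable (@strongly_admissible U) (@alpha_gr U) (@beta_adm U).
Proof.
move=> F wf S; split.
- move=> saS.
  have [G r] := dir2 wf saS (Inv0 wf) (fsub0set S) (leqnn (#|`S `\` fset0|).+1).
  by exists G; split.
- move=> [G [r _]].
  apply: (dir1 wf r erefl (Inv0 wf)).
  apply: sa_intro; last by left.
  split; first exact: fsub0set.
  by split=> [a b|a]; rewrite in_fset0.
Qed.

End Proof7.

Theorem theorem7 (U : choiceType) :
  serialisable (@strongly_admissible U) (@alpha_gr U) (@beta_adm U).
Proof. exact: theorem7'. Qed.
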